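(* Let $(X,d_X)$ be a metric space and $p,q\in[1,\infty)$. Then for every $m,n\in\mathbb N$, $k\in\{1,\ldots,n\}$ and $f:\mathbb Z_{8m}^n\to X$, $$\sum_{\varepsilon\in\{-1,1\}^n}\sum_{x\in\mathbb Z_{8m}^n}d_X(f(x+2\varepsilon),f(x))^p\lesssim_p\Big(\mathrm{BMW}_q^{\lfloor n/k\rfloor+1}(X;p)\Big)^p\frac{(n/k)^{p/q}}{\binom nk}\sum_{\substack{S\subset\{1,\ldots,n\}\\|S|=k}}\sum_{\varepsilon\in\{-1,1\}^n}\sum_{x\in\mathbb Z_{8m}^n}d_X(f(x+\varepsilon_S),f(x))^p.$$
   Context: $\mathbb Z_{8m}^n=(\mathbb Z/8m\mathbb Z)^n$, integer vectors added modulo $8m$; $\varepsilon_S=\sum_{j\in S}\varepsilon_je_j$. For $N\in\mathbb N$ and $j\le N$, $\sigma^j\in\{-1,1\}^N$ has $-1$ in coordinate $j$ and $1$ elsewhere; $\sigma^j\varepsilon$ denotes coordinatewise product (flipping the $j$th sign). $\mathrm{BMW}_q^N(X;p)$ is the infimum of $B\in[1,\infty)$ such that every $h:\{-1,1\}^N\to X$ satisfies $\sum_{\varepsilon}d_X(h(\varepsilon),h(-\varepsilon))^p\le B^pN^{p/q-1}\sum_{j=1}^N\sum_{\varepsilon}d_X(h(\sigma^j\varepsilon),h(\varepsilon))^p$ (sums over $\varepsilon\in\{-1,1\}^N$). $a\lesssim_p b$ means $a\le c^pb$ for a universal constant $c$. *)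

(* Defs.v *)
From Stdlib Require Import Reals.
From mathcomp Require Import all_boot all_order all_algebra.
Set Implicit Arguments. Unset Strict Implicit. Unset Printing Implicit Defensive.

Definition rpow (t p : R) : R := if Rle_dec t 0 then R0 else Rpower t p.

Notation "\rsum_ ( i : T ) F" := (\big[Rplus/R0]_(i : T) F)
  (at level 41, F at level 41, i at level 50).
Notation "\rsum_ ( i : T | P ) F" := (\big[Rplus/R0]_(i : T | P) F)
  (at level 41, F at level 41, i at level 50).

(* sign vectors {-1,1}^N, encoded as boolean functions (true = +1, false = -1) *)
Definition signs (N : nat) := {ffun 'I_N -> bool}.
Definition sneg (N : nat) (e : signs N) : signs N := [ffun i => ~~ e i].
Definition sflip (N : nat) (j : 'I_N) (e : signs N) : signs N :=
  [ffun i => if i == j then ~~ e i else e i].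

(* B is admissible in the definition of BMW_q^N(X;p):
   B >= 1 and every h : {-1,1}^N -> X satisfies the inequality.
   BMW_q^N(X;p) is the infimum of the admissible B. *)
Definition BMW_admissible (X : Metric_Space) (q p : R) (N : nat) (B : R) : Prop :=
  Rle 1 B /\
  forall h : signs N -> Base X,
    Rle (\rsum_(e : signs N) rpow (dist X (h e) (h (sneg e))) p)
        (Rmult (Rmult (rpow B p) (Rpower (INR N) (Rminus (Rdiv p q) 1)))
           (\rsum_(j : 'I_N) \rsum_(e : signs N) rpow (dist X (h (sflip j e)) (h e)) p)).

Definition zsign (M : nat) (b : bool) : 'Z_M := if b then 1%R else (-1)%R.

Definition two_eps (M n : nat) (e : signs n) : 'rV['Z_M]_n :=
  \row_i (zsign M (e i) *+ 2)%R.
Definition eps_S (M n : nat) (S : {set 'I_n}) (e : signs n) : 'rV['Z_M]_n :=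
  \row_i (if i \in S then zsign M (e i) else 0%R).

(* Main.v *)
Require Import Defs.
From Stdlib Require Import Reals.
From Stdlib Require Import Lra.
From HB Require Import structures.
From mathcomp Require Import all_boot all_order all_algebra all_fingroup zify.
From Stdlib Require Import Lia.

Lemma Rplus_assoc' : associative Rplus. Proof. by move=> *; rewrite Rplus_assoc. Qed.
HB.instance Definition _ := Monoid.isComLaw.Build R R0 Rplus Rplus_assoc' Rplus_comm Rplus_0_l.

Lemma card_interval n a k : (a + k <= n)%N -> #|[set i : 'I_n | (a <= i < a + k)%N]| = k.
Proof.
move=> h.
rewrite cardsE cardE /enum_mem size_filter. 
have -> : Finite.enum 'I_n = enum 'I_n by rewrite enumT /index_enum !unlock.
rewrite -(count_map val (fun x => a <= x < a + k)) val_enum_ord.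
rewrite -(subnKC h) iotaD iotaD !count_cat add0n.
rewrite (eq_in_count (a1 := fun x => a <= x < a + k) (a2 := pred0)); last first.
  by move=> x; rewrite mem_iota add0n /= => hx; rewrite leqNgt hx.
rewrite count_pred0.
rewrite (eq_in_count (a1 := fun x => a <= x < a + k) (a2 := predT)); last first.
  by move=> x; rewrite mem_iota.
rewrite count_predT size_iota.
rewrite (eq_in_count (a1 := fun x => a <= x < a + k) (a2 := pred0)); last first.
  by move=> x; rewrite mem_iota add0n /= => /andP[hx _]; rewrite ltnNge hx andbF.
by rewrite count_pred0 addn0.
Qed.

Section Blocks.
Variables n k : nat.
Hypothesis hk : (0 < k)%N.
Hypothesis hkn : (k <= n)%N.
Definition Nb := (n %/ k + 1)%N.
Lemma g0_proof (i : 'I_n) : (i %/ k < Nb)%N.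
Proof. by rewrite /Nb addn1 ltnS leq_div2r // ltnW. Qed.
Definition g0 (i : 'I_n) : 'I_Nb := Ordinal (g0_proof i).
Definition aj (j : nat) := minn (j * k) (n - k).
Definition S0 (j : 'I_Nb) : {set 'I_n} := [set i : 'I_n | (aj j <= i < aj j + k)%N].
Lemma S0_card j : #|S0 j| = k.
Proof. apply: card_interval; rewrite /aj; lia. Qed.
Lemma S0_block i j : g0 i = j -> i \in S0 j.
Proof.
move=> <-; rewrite inE /aj /=.
have h1 := leq_trunc_div i k. have h2 := ltn_ceil i hk. have h3 := ltn_ord i.
lia.
Qed.
End Blocks.

Open Scope R_scope.

Lemma rsum_le (I : Type) (r : seq I) (P : pred I) (F G : I -> R) :
  (forall i, P i -> F i <= G i) ->
  \big[Rplus/R0]_(i <- r | P i) F i <= \big[Rplus/R0]_(i <- r | P i) G i.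
Proof. move=> H; apply: (big_ind2 (fun a b => a <= b)) => //; [lra| move=> *; lra]. Qed.

Lemma rsum_ge0 (I : Type) (r : seq I) (P : pred I) (F : I -> R) :
  (forall i, P i -> 0 <= F i) -> 0 <= \big[Rplus/R0]_(i <- r | P i) F i.
Proof. move=> H; apply: (big_ind (fun a => 0 <= a)) => //; [lra| move=> *; lra]. Qed.

Lemma rsum_mull (I : Type) (r : seq I) (P : pred I) (F : I -> R) c :
  c * \big[Rplus/R0]_(i <- r | P i) F i = \big[Rplus/R0]_(i <- r | P i) (c * F i).
Proof. apply: (big_rec2 (fun a b => c * a = b)); [ring | move=> i a b _ <-; ring]. Qed.

Lemma rexch (I J : finType) (F : I -> J -> R) :
  \big[Rplus/R0]_(i : I) \big[Rplus/R0]_(j : J) F i j =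
  \big[Rplus/R0]_(j : J) \big[Rplus/R0]_(i : I) F i j.
Proof. exact: exchange_big. Qed.

Lemma rsplit (I : finType) (F G : I -> R) :
  \big[Rplus/R0]_(i : I) F i + \big[Rplus/R0]_(i : I) G i = \big[Rplus/R0]_(i : I) (F i + G i).
Proof. by rewrite big_split. Qed.

Lemma Rdbl a t : a * (t + t) = 2 * a * t.
Proof. ring. Qed.

Lemma Rmul_swap a b t : a * (b * t) = b * (a * t).
Proof. ring. Qed.

Lemma iter_Rplus c n : iter n (Rplus c) R0 = INR n * c.
Proof. elim: n => [|n IH]; first by rewrite /=; ring. rewrite iterS IH S_INR; ring. Qed.

Lemma rsum_const (T : finType) c : \big[Rplus/R0]_(i : T) c = INR #|T| * c.
Proof. rewrite big_const_seq count_predT cardT enumT iter_Rplus. done. Qed.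

Lemma Rpower_gt0 a b : 0 < Rpower a b.
Proof. rewrite /Rpower; apply: exp_pos. Qed.

Lemma rpow_ge0 t p : 0 <= rpow t p.
Proof. rewrite /rpow; case: Rle_dec => h; [apply: Rle_refl | apply: Rlt_le; apply: Rpower_gt0]. Qed.

Lemma rpow_pos t p : 0 < t -> rpow t p = Rpower t p.
Proof. move=> ht; rewrite /rpow; case: Rle_dec => // h; lra. Qed.

Lemma rpow_nonpos t p : t <= 0 -> rpow t p = 0.
Proof. move=> h; rewrite /rpow; case: Rle_dec => // h'; lra. Qed.

Lemma rpow_le s t p : 0 <= p -> 0 <= s <= t -> rpow s p <= rpow t p.
Proof.
move=> hp hst; rewrite {1}/rpow; case: Rle_dec => hs; first exact: rpow_ge0.
rewrite rpow_pos; last lra. apply: Rle_Rpower_l; lra.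
Qed.

Lemma rpow_mul a t p : 0 <= a -> 0 <= t -> rpow (a * t) p = rpow a p * rpow t p.
Proof.
move=> ha ht.
case: (Req_dec a 0) => [->|ha']; first by rewrite Rmult_0_l (@rpow_nonpos 0); [ring | lra].
case: (Req_dec t 0) => [->|ht']; first by rewrite Rmult_0_r (@rpow_nonpos 0); [ring | lra].
have ha2 : 0 < a by lra. have ht2 : 0 < t by lra.
rewrite !rpow_pos //; last exact: Rmult_lt_0_compat.
by rewrite Rpower_mult_distr.
Qed.

Lemma rpow_add s t p : 0 <= p -> 0 <= s -> 0 <= t ->
  rpow (s + t) p <= rpow 2 p * (rpow s p + rpow t p).
Proof.
move=> hp hs ht.
have h1 : rpow (s + t) p <= rpow (2 * Rmax s t) p.
  apply: rpow_le => //; split; [lra|]. have := Rmax_l s t; have := Rmax_r s t; lra.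
apply: (Rle_trans _ _ _ h1); rewrite rpow_mul; [|lra|]; last first.
  have := Rmax_l s t; lra.
apply: Rmult_le_compat_l; first exact: rpow_ge0.
have := rpow_ge0 s p; have := rpow_ge0 t p.
rewrite /Rmax; case: Rle_dec => _; lra.
Qed.

Import GRing.Theory.

Section Vec.
Variables (X : Metric_Space) (p : R) (M n : nat).
Variable f : 'rV['Z_M]_n -> Base X.
Local Notation V := 'rV['Z_M]_n.

Definition Delta (a : V) : R := \big[Rplus/R0]_(x : V) rpow (dist X (f (x + a)%R) (f x)) p.

Lemma sum_shift (G : V -> R) (a : V) :
  \big[Rplus/R0]_(x : V) G (x + a)%R = \big[Rplus/R0]_(x : V) G x.
Proof. by rewrite [RHS](reindex_inj (addIr a)). Qed.

Lemma Delta_ge0 a : 0 <= Delta a.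
Proof. apply: rsum_ge0 => x _; exact: rpow_ge0. Qed.

Lemma zsign_neg b : zsign M (~~ b) = (- zsign M b)%R.
Proof. by case: b; rewrite /zsign /= ?opprK. Qed.

Lemma sum_inv (T : finType) (h : T -> T) (G : T -> R) :
  involutive h -> \big[Rplus/R0]_(x : T) G (h x) = \big[Rplus/R0]_(x : T) G x.
Proof. move=> hh; by rewrite [RHS](reindex_inj (inv_inj hh)). Qed.

End Vec.

Section Step.
Variables (X : Metric_Space) (p q : R) (M n N : nat).
Variable f : 'rV['Z_M]_n -> Base X.
Variable g : 'I_n -> 'I_N.
Local Notation V := 'rV['Z_M]_n.

Definition comb (e : signs n) (d : signs N) : signs n := [ffun i => e i == d (g i)].
Definition wv (e : signs n) (d : signs N) : V := \row_i zsign M (comb e d i).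
Definition Dj (j : 'I_N) (e : signs n) : V :=
  \row_i (if g i == j then zsign M (e i) *+ 2 else 0)%R.

Lemma comb_inv d : involutive (comb^~ d).
Proof. by move=> e; apply/ffunP => i; rewrite !ffunE; case: (e i); case: (d (g i)). Qed.

Lemma wv_neg e d : wv e (sneg d) = (- wv e d)%R.
Proof.
apply/rowP => i; rewrite !mxE !ffunE -zsign_neg; congr zsign.
by case: (e i); case: (d (g i)).
Qed.

Lemma wv_two e d : two_eps M (comb e d) = (wv e d + wv e d)%R.
Proof. by apply/rowP => i; rewrite !mxE mulr2n. Qed.

Lemma wv_flip e d j : wv e (sflip j d) = (wv e d - Dj j (comb e d))%R.
Proof.
apply/rowP => i; rewrite !mxE !ffunE.
case: (g i =P j) => [->|hne]; last by rewrite subr0.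
have -> : (e i == ~~ d j) = ~~ (e i == d j) by case: (e i); case: (d j).
by rewrite zsign_neg mulr2n opprD addrA subrr sub0r.
Qed.

Variable K : R.
Hypothesis adm : forall h : signs N -> Base X,
  \big[Rplus/R0]_(d : signs N) rpow (dist X (h d) (h (sneg d))) p <=
  K * \big[Rplus/R0]_(j : 'I_N) \big[Rplus/R0]_(d : signs N)
         rpow (dist X (h (sflip j d)) (h d)) p.

Lemma step_lhs d :
  \big[Rplus/R0]_(x : V) \big[Rplus/R0]_(e : signs n)
     rpow (dist X (f (x + wv e d)%R) (f (x + wv e (sneg d))%R)) p
  = \big[Rplus/R0]_(e : signs n) Delta X p M n f (two_eps M e).
Proof.
rewrite rexch /=.
rewrite -(@sum_inv _ _ (fun e => Delta X p M n f (two_eps M e)) (comb_inv d)).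
apply: eq_bigr => e _; rewrite wv_two /Delta.
rewrite -(@sum_shift _ _ (fun x => rpow (dist X (f (x + (wv e d + wv e d))%R) (f x)) p) (- wv e d)).
apply: eq_bigr => x _; by rewrite wv_neg addrA subrK.
Qed.

Lemma step_rhs j d :
  \big[Rplus/R0]_(x : V) \big[Rplus/R0]_(e : signs n)
     rpow (dist X (f (x + wv e (sflip j d))%R) (f (x + wv e d)%R)) p
  = \big[Rplus/R0]_(e : signs n) Delta X p M n f (Dj j e).
Proof.
rewrite rexch /=.
rewrite -(@sum_inv _ _ (fun e => Delta X p M n f (Dj j e)) (comb_inv d)).
apply: eq_bigr => e _; rewrite /Delta.
rewrite -(@sum_shift _ _ (fun x => rpow (dist X (f (x + Dj j (comb e d))%R) (f x)) p) (wv e d - Dj j (comb e d))).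
apply: eq_bigr => x _; rewrite wv_flip dist_sym; congr (rpow (dist X (f _) (f _)) p); by rewrite addrA subrK.
Qed.

Lemma step :
  \big[Rplus/R0]_(e : signs n) Delta X p M n f (two_eps M e) <=
  K * \big[Rplus/R0]_(j : 'I_N) \big[Rplus/R0]_(e : signs n) Delta X p M n f (Dj j e).
Proof.
have H1 : \big[Rplus/R0]_(x : V) \big[Rplus/R0]_(e : signs n) \big[Rplus/R0]_(d : signs N)
     rpow (dist X (f (x + wv e d)%R) (f (x + wv e (sneg d))%R)) p <=
  \big[Rplus/R0]_(x : V) \big[Rplus/R0]_(e : signs n) (K * \big[Rplus/R0]_(j : 'I_N) \big[Rplus/R0]_(d : signs N)
     rpow (dist X (f (x + wv e (sflip j d))%R) (f (x + wv e d)%R)) p).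
  apply: rsum_le => x _; apply: rsum_le => e _.
  exact: (adm (fun d => f (x + wv e d)%R)).
set c := INR #|signs N|.
have EL : \big[Rplus/R0]_(x : V) \big[Rplus/R0]_(e : signs n) \big[Rplus/R0]_(d : signs N)
     rpow (dist X (f (x + wv e d)%R) (f (x + wv e (sneg d))%R)) p =
   c * \big[Rplus/R0]_(e : signs n) Delta X p M n f (two_eps M e).
  under eq_bigr => x _ do rewrite rexch.
  rewrite rexch.
  under eq_bigr => d _ do rewrite step_lhs.
  by rewrite rsum_const.
have ER : \big[Rplus/R0]_(x : V) \big[Rplus/R0]_(e : signs n) (K * \big[Rplus/R0]_(j : 'I_N) \big[Rplus/R0]_(d : signs N)
     rpow (dist X (f (x + wv e (sflip j d))%R) (f (x + wv e d)%R)) p) =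
   c * (K * \big[Rplus/R0]_(j : 'I_N) \big[Rplus/R0]_(e : signs n) Delta X p M n f (Dj j e)).
  under eq_bigr => x _ do rewrite -rsum_mull.
  rewrite -rsum_mull.
  under eq_bigr => x _ do (rewrite rexch; under eq_bigr => j _ do rewrite rexch).
  rewrite rexch.
  under eq_bigr => j _ do rewrite rexch.
  under eq_bigr => j _ do under eq_bigr => d _ do rewrite step_rhs.
  under eq_bigr => j _ do rewrite rsum_const.
  rewrite -rsum_mull; exact: Rmul_swap.
rewrite EL ER in H1.

have hc : 0 < c.
  apply: lt_0_INR; apply/ltP; apply/card_gt0P; exists [ffun => true]; done.
apply: (Rmult_le_reg_l _ _ _ hc). 
exact: H1.
Qed.

End Step.

Section Tbound.
Variables (X : Metric_Space) (p : R) (M n N : nat).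
Variable f : 'rV['Z_M]_n -> Base X.
Variable g : 'I_n -> 'I_N.
Hypothesis hp : 0 <= p.
Local Notation V := 'rV['Z_M]_n.
Local Notation Del := (Delta X p M n f).

Lemma Delta_add (a b : V) : Del (a + b)%R <= rpow 2 p * (Del a + Del b).
Proof.
rewrite /Delta.
have -> : \big[Rplus/R0]_(x : V) rpow (dist X (f (x + b)%R) (f x)) p =
          \big[Rplus/R0]_(x : V) rpow (dist X (f (x + (a + b))%R) (f (x + a)%R)) p.
  rewrite -(@sum_shift _ _ (fun x => rpow (dist X (f (x + b)%R) (f x)) p) a).
  by apply: eq_bigr => x _; rewrite addrA.
rewrite rsplit rsum_mull; apply: rsum_le => x _.
rewrite Rplus_comm.
have h1 := dist_pos X (f (x + (a + b))%R) (f (x + a)%R).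
have h2 := dist_pos X (f (x + a)%R) (f x).
have h3 := dist_pos X (f (x + (a + b))%R) (f x).
eapply Rle_trans; last apply: rpow_add; try (apply: Rge_le; exact: dist_pos); try done.
apply: rpow_le => //; split; first (apply: Rge_le; exact: dist_pos).
exact: dist_tri.
Qed.

Definition Uset (S : {set 'I_n}) : R := \big[Rplus/R0]_(e : signs n) Del (eps_S M S e).

Lemma Uset_ge0 S : 0 <= Uset S.
Proof. apply: rsum_ge0 => e _; exact: Delta_ge0. Qed.

Lemma Tj_bound (j : 'I_N) (S : {set 'I_n}) :
  (forall i, g i = j -> i \in S) ->
  \big[Rplus/R0]_(e : signs n) Del (@Dj M n N g j e) <= 2 * rpow 2 p * Uset S.
Proof.
move=> hS.
pose fl (e : signs n) : signs n := [ffun i => if g i == j then e i else ~~ e i].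
have flK : involutive fl.
  by move=> e; apply/ffunP => i; rewrite !ffunE; case: (g i == j) => //; rewrite negbK.
have dec : forall e, @Dj M n N g j e = (eps_S M S e + eps_S M S (fl e))%R.
  move=> e; apply/rowP => i; rewrite !mxE !ffunE.
  case: (g i =P j) => [gij|gij].
    by rewrite hS // mulr2n.
  case: ifP => iS; last by rewrite addr0.
  by rewrite zsign_neg subrr.
apply: (Rle_trans _ (\big[Rplus/R0]_(e : signs n) (rpow 2 p * (Del (eps_S M S e) + Del (eps_S M S (fl e)))))).
  by apply: rsum_le => e _; rewrite dec; apply: Delta_add.
rewrite -rsum_mull -rsplit (@sum_inv _ fl (fun e => Del (eps_S M S e)) flK).
rewrite /Uset; right; exact: Rdbl.
Qed.

End Tbound.

Lemma perm_exists (T : finType) (A B : {set T}) : #|A| = #|B| ->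
  exists s : {perm T}, s @: A = B.
Proof.
move=> hAB.
pose s1 := enum A ++ enum (~: A).
pose s0 := enum B ++ enum (~: B).
have mem1 : forall x, x \in s1 by move=> x; rewrite mem_cat !mem_enum in_setC; case: (x \in A).
have sz0 : size s0 = #|T| by rewrite size_cat -!cardE cardsC.
have sz1 : size s1 = #|T| by rewrite size_cat -!cardE cardsC.
have u0 : uniq s0.
  rewrite cat_uniq !enum_uniq /= andbT; apply/hasPn => z; rewrite !mem_enum in_setC => /negP h.
  by apply/negP.
pose s0f (x : T) := nth x s0 (index x s1).
have inj : injective s0f.
  move=> x y; rewrite /s0f => hxy.
  have ix : (index x s1 < size s0)%N by rewrite sz0 -sz1 index_mem.
  have iy : (index y s1 < size s0)%N by rewrite sz0 -sz1 index_mem.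
  move: hxy; rewrite (set_nth_default y x ix) => /eqP; rewrite nth_uniq // => /eqP hi.
  by rewrite -(nth_index x (mem1 x)) hi (set_nth_default y x) ?nth_index // sz1 -sz0.
exists (perm inj).
apply/eqP; rewrite eqEcard card_imset ?hAB ?leqnn ?andbT; last exact: perm_inj.
apply/subsetP => y /imsetP [x xA ->]; rewrite permE /s0f /s0 /s1 index_cat mem_enum xA.
have hi : (index x (enum A) < size (enum B))%N by rewrite -cardE -hAB cardE index_mem mem_enum.
by rewrite nth_cat hi -mem_enum mem_nth.
Qed.

Lemma rsum_const_pred (T : finType) (P : pred T) c :
  \big[Rplus/R0]_(i : T | P i) c = INR #|[set i | P i]| * c.
Proof.
rewrite big_const_seq -iter_Rplus; congr iter.
rewrite cardsE cardE /enum_mem size_filter. by rewrite /index_enum !unlock.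
Qed.

Section Avg.
Variables (n k : nat).
Variable U : {set 'I_n} -> R.

Definition Phi (A : {set 'I_n}) := \big[Rplus/R0]_(s : {perm 'I_n}) U (s @: A).

Lemma Phi_const (A B : {set 'I_n}) : #|A| = #|B| -> Phi A = Phi B.
Proof.
move=> /perm_exists [sg <-]; rewrite /Phi.
rewrite [LHS](reindex_inj (mulgI sg)).
apply: eq_bigr => s _; congr U.
rewrite -imset_comp; apply: eq_imset => x /=; by rewrite permM.
Qed.

Lemma avg (A0 : {set 'I_n}) : #|A0| = k ->
  INR 'C(n, k) * Phi A0 =
  INR #|{perm 'I_n}| * \big[Rplus/R0]_(S : {set 'I_n} | #|S| == k) U S.
Proof.
move=> hA0.
have e1 : \big[Rplus/R0]_(A : {set 'I_n} | #|A| == k) Phi A = INR 'C(n, k) * Phi A0.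
  rewrite -[X in 'C(X, k)](card_ord n) -card_draws -rsum_const_pred.
  by apply: eq_bigr => A /eqP hA; apply: Phi_const; rewrite hA hA0.
rewrite -e1 /Phi.
have -> : forall F : {set 'I_n} -> {perm 'I_n} -> R,
  \big[Rplus/R0]_(A : {set 'I_n} | #|A| == k) \big[Rplus/R0]_(s : {perm 'I_n}) F A s =
  \big[Rplus/R0]_(s : {perm 'I_n}) \big[Rplus/R0]_(A : {set 'I_n} | #|A| == k) F A s.
  by move=> F; rewrite exchange_big.
rewrite -rsum_const; apply: eq_bigr => s _.
rewrite [RHS](reindex_inj (imset_inj (@perm_inj _ s))) /=.
by apply: eq_bigl => A; rewrite card_imset //; exact: perm_inj.
Qed.

End Avg.

Lemma main_bound (X : Metric_Space) (p q : R) (M n k : nat) (f : 'rV['Z_M]_n -> Base X) (B : R) :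
  1 <= p -> 1 <= q -> (0 < k)%N -> (k <= n)%N ->
  BMW_admissible X q p (n %/ k + 1) B ->
  \big[Rplus/R0]_(e : signs n) Delta X p M n f (two_eps M e) <=
  rpow 8 p * (rpow B p * (Rpower (INR n / INR k) (p / q) / INR 'C(n, k)) *
     \big[Rplus/R0]_(S : {set 'I_n} | #|S| == k) Uset X p M n f S).
Proof.
move=> hp hq hk hkn [hB adm].
set N := Nb n k.
set K := rpow B p * Rpower (INR N) (p / q - 1).
set Lv := \big[Rplus/R0]_(e : signs n) Delta X p M n f (two_eps M e).
set Uv := \big[Rplus/R0]_(S : {set 'I_n} | #|S| == k) Uset X p M n f S.
set r2 := rpow 2 p.
have hp0 : 0 <= p by lra.
have hK : 0 <= K.
  rewrite /K; apply: Rmult_le_pos; first exact: rpow_ge0.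
  apply: Rlt_le; exact: Rpower_gt0.
have Hpi : forall s : {perm 'I_n},
    Lv <= K * \big[Rplus/R0]_(j : 'I_N) (2 * r2 * Uset X p M n f (s @: S0 n k j)).
  move=> s.
  pose gs (i : 'I_n) := g0 n k (s^-1%g i).
  apply: Rle_trans (@step X p M n N f gs K adm) _.
  apply: Rmult_le_compat_l => //; apply: rsum_le => j _.
  apply: Tj_bound => // i hi.
  have -> : i = s (s^-1%g i) by rewrite permKV.
  by apply: imset_f; apply: S0_block.
set Cv := INR 'C(n, k).
have hCv : 0 < Cv by apply: lt_0_INR; apply/ltP; rewrite bin_gt0.
set P := INR #|{perm 'I_n}|.
have hP : 0 < P by apply: lt_0_INR; apply/ltP; apply/card_gt0P; exists 1%g.
have hPhi : forall j : 'I_N, Phi n (Uset X p M n f) (S0 n k j) = P * Uv / Cv.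
  move=> j; have := @avg n k (Uset X p M n f) (S0 n k j) (@S0_card n k hk hkn j).
  rewrite -/Cv -/P -/Uv => h; field_simplify_eq; last lra.
  by rewrite -h; ring.
have H2 : P * Lv <= P * (K * (2 * r2 * (INR N * (Uv / Cv)))).
  have E : \big[Rplus/R0]_(s : {perm 'I_n}) (K * \big[Rplus/R0]_(j : 'I_N) (2 * r2 * Uset X p M n f (s @: S0 n k j)))
     = P * (K * (2 * r2 * (INR N * (Uv / Cv)))).
    rewrite -rsum_mull.
    under eq_bigr => s _ do rewrite -rsum_mull.
    rewrite -rsum_mull rexch.
    rewrite (eq_bigr (fun j : 'I_N => P * Uv / Cv)); last first.
      by move=> j _; rewrite -(hPhi j).
    rewrite rsum_const card_ord /Rdiv; ring.
  have := @rsum_le _ (index_enum {perm 'I_n}) xpredT _ _ (fun s _ => Hpi s).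
  rewrite rsum_const -/P => H; apply: (Rle_trans _ _ _ H); right; exact: E.
have H3 : Lv <= K * (2 * r2 * (INR N * (Uv / Cv))) by apply: (Rmult_le_reg_l _ _ _ hP).
have hk0 : 0 < INR k by apply: lt_0_INR; apply/ltP.
have hN0 : 0 < INR N by apply: lt_0_INR; apply/ltP; rewrite /N /Nb addn1.
have hNb : INR N <= 2 * (INR n / INR k).
  have h : ((n %/ k + 1) * k <= 2 * n)%N.
    rewrite mulnDl mul1n mul2n -addnn; apply: leq_add => //; exact: leq_trunc_div.
  move/leP: h => /le_INR; rewrite !mult_INR /N /Nb => h.
  have e2 : INR 2 = 2 by rewrite /=; ring.
  rewrite e2 in h. apply: (Rmult_le_reg_r _ _ _ hk0). rewrite Rmult_assoc /Rdiv Rmult_assoc Rinv_l; lra.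
have hpq0 : 0 <= p / q by apply: Rle_mult_inv_pos; lra.
have hpq : p / q <= p.
  apply: (Rmult_le_reg_r q); first lra.
  rewrite /Rdiv Rmult_assoc Rinv_l; nra.
have hr2 : r2 = Rpower 2 p by rewrite /r2 rpow_pos //; lra.
have h2r2 : 2 <= r2.
  rewrite hr2; rewrite -{1}(Rpower_1 2); last lra. apply: Rle_Rpower; lra.
set Q := Rpower (INR n / INR k) (p / q).
have hnk : 0 < INR n / INR k.
  apply: Rdiv_lt_0_compat => //; apply: lt_0_INR; apply/ltP; exact: leq_trans hk hkn.
have hNQ : Rpower (INR N) (p / q) <= r2 * Q.
  apply: (Rle_trans _ (Rpower (2 * (INR n / INR k)) (p / q))).
    apply: Rle_Rpower_l => //; lra.
  rewrite -Rpower_mult_distr //; last lra.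
  apply: Rmult_le_compat_r; first (apply: Rlt_le; exact: Rpower_gt0).
  rewrite hr2; apply: Rle_Rpower; lra.
have hKN : K * INR N = rpow B p * Rpower (INR N) (p / q).
  rewrite /K Rmult_assoc; congr (_ * _).
  rewrite -{2}(Rpower_1 (INR N)) // -Rpower_plus; congr Rpower; ring.
have h8 : rpow 8 p = r2 * (r2 * r2).
  rewrite /r2 -!rpow_mul; try lra. congr rpow; ring.
set W := rpow B p * Uv / Cv.
have hW : 0 <= W.
  rewrite /W /Rdiv; apply: Rmult_le_pos; last (apply: Rlt_le; exact: Rinv_0_lt_compat).
  apply: Rmult_le_pos; first exact: rpow_ge0.
  apply: rsum_ge0 => S _; exact: Uset_ge0.
have E1 : K * (2 * r2 * (INR N * (Uv / Cv))) = Rpower (INR N) (p / q) * (2 * r2) * W.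
  rewrite /W; transitivity ((K * INR N) * (2 * r2) * (Uv / Cv)); first ring.
  rewrite hKN /Rdiv; ring.
have E2 : rpow 8 p * (rpow B p * (Q / Cv) * Uv) = (r2 * Q) * (r2 * r2) * W.
  rewrite h8 /W /Rdiv; ring.
rewrite E2; rewrite E1 in H3; apply: (Rle_trans _ _ _ H3).
apply: Rmult_le_compat_r => //.
apply: Rmult_le_compat; [apply: Rlt_le; exact: Rpower_gt0 | lra | exact: hNQ | nra].
Qed.

Close Scope R_scope.

Theorem mainTheorem13 :
  exists c : R, Rlt 0 c /\
  forall (X : Metric_Space) (p q : R), Rle 1 p -> Rle 1 q ->
  forall (m n k : nat), (1 <= m)%N -> (1 <= k)%N -> (k <= n)%N ->
  forall (f : 'rV['Z_(8 * m)]_n -> Base X) (B : R),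
  BMW_admissible X q p (n %/ k + 1) B ->
  Rle (\rsum_(e : signs n) \rsum_(x : 'rV['Z_(8 * m)]_n)
         rpow (dist X (f (x + two_eps (8 * m) e)%R) (f x)) p)
      (Rmult (rpow c p)
        (Rmult (Rmult (rpow B p)
                  (Rdiv (Rpower (Rdiv (INR n) (INR k)) (Rdiv p q)) (INR 'C(n, k))))
           (\rsum_(S : {set 'I_n} | #|S| == k) \rsum_(e : signs n)
              \rsum_(x : 'rV['Z_(8 * m)]_n)
                rpow (dist X (f (x + eps_S (8 * m) S e)%R) (f x)) p))).
Proof.
exists (IZR 8); split; first lra.
move=> X p q hp hq m n k hm hk hkn f B hB.
have H := @main_bound X p q (8 * m) n k f B hp hq hk hkn hB.
rewrite /Uset /Delta in H; exact: H.
Qed.
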